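(* Let $\mathcal{H}$ be a finite family of rooted digraphs. Let $D$ be a digraph, $k$ an integer, $W$ an $\mathcal{H}$-deletion set of $D$ with $|W|\le k+1$, $\mathcal{S}=(S_1,\dots,S_q)$ an ordered partition of $W$, and let $X$ be a solution for $(D,\mathcal{S},W,k)$. If $u\in V(D)$ lies in ${\sf F\textrm{-}Shadow}(X)$ (respectively ${\sf R\textrm{-}Shadow}(X)$), then there is a solution for $(D,\mathcal{S},W,k)$ that contains an important $\{u\}$-$W$ separator in $D$ (respectively an important $\{u\}$-$W$ separator in $D^{rev}$).
   Context: Subgraphs are not necessarily induced; strong components are maximal sets of mutually reachable vertices. A digraph is rooted if some vertex reaches all its vertices. $X$ is an $\mathcal{H}$-deletion set of $D$ if no strong component of $D-X$ contains a subgraph isomorphic to a graph in $\mathcal{H}$. A solution for $(D,\mathcal{S},W,k)$ is a set $X\subseteq V(D)$ with $|X|\le k$, $X\cap W=\emptyset$, $X$ an $\mathcal{H}$-deletion set, and $X$ intersecting every directed $S_i$-$S_j$ path for all $i<j$. For $X\subseteq V(D)\setminus W$, ${\sf F\textrm{-}Shadow}(X)$ is the set of vertices $u\notin X$ such that $D-X$ has no directed path from $u$ to $W$, and ${\sf R\textrm{-}Shadow}(X)$ is the set of $u\notin X$ such that $D-X$ has no directed path from $W$ to $u$. $D^{rev}$ is $D$ with all arcs reversed. For disjoint $A,B$, an $A$-$B$ separator is a set $C$ disjoint from $A\cup B$ with no $A$-$B$ path in $D-C$; $R_D(A,C)$ is the set of vertices reachable from $A$ in $D-C$; $C'$ covers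 $C$ if $R_D(A,C')\supseteq R_D(A,C)$. An $A$-$B$ separator $C$ is important if there is no $A$-$B$ separator $C'\neq C$ with $|C'|\le|C|$ that covers $C$. *)

(* Defs.v *)
From mathcomp Require Import all_boot.
From Stdlib Require List.
Set Implicit Arguments. Unset Strict Implicit. Unset Printing Implicit Defensive.

Record digraph := Digraph { dvert : finType; darc : rel dvert }.

Section Digraphs.
Variable V : finType.
Implicit Types (E : rel V) (X A B C W : {set V}).

Definition rev_rel E : rel V := fun x y => E y x.

Definition del_rel E X : rel V :=
  fun x y => [&& x \notin X, y \notin X & E x y].

Definition reach_in E X u v : bool :=
  (u \notin X) && connect (del_rel E X) u v.

Definition strong_component E X C : Prop :=
  [/\ C != set0, C \subset ~: X,
      (forall x y, x \in C -> y \in C -> reach_in E X x y) &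
      (forall C' : {set V}, C \subset C' -> C' \subset ~: X ->
         (forall x y, x \in C' -> y \in C' -> reach_in E X x y) -> C' = C)].

(* the digraph restricted to C (D[C] with arcs of D) contains a
   (not necessarily induced) subgraph isomorphic to H *)
Definition contains_sub E C (H : digraph) : Prop :=
  exists f : dvert H -> V,
    [/\ injective f, (forall x, f x \in C) &
        (forall x y, @darc H x y -> E (f x) (f y))].

Definition deletion_set (Hs : seq digraph) E X : Prop :=
  forall C, strong_component E X C ->
  forall H, Stdlib.Lists.List.In H Hs -> ~ contains_sub E C H.

Definition hits_all_paths E X A B : Prop :=
  forall x p, x \in A -> path E x p -> last x p \in B -> has (mem X) (x :: p).

Definition ordered_partition (S : seq {set V}) (W : {set V}) : Prop :=
  [/\ all (fun A => A != set0) S,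
      (forall i j, i < j < size S -> [disjoint nth set0 S i & nth set0 S j]) &
      \bigcup_(A <- S) A = W].

Definition solution (Hs : seq digraph) E (S : seq {set V}) (W : {set V}) (k : nat)
  X : Prop :=
  [/\ #|X| <= k, [disjoint X & W], deletion_set Hs E X &
      forall i j, i < j < size S ->
        hits_all_paths E X (nth set0 S i) (nth set0 S j)].

Definition F_shadow E W X : {set V} :=
  [set u | (u \notin X) && [forall w in W, ~~ reach_in E X u w]].

Definition R_shadow E W X : {set V} :=
  [set u | (u \notin X) && [forall w in W, ~~ reach_in E X w u]].

Definition separator E A B C : Prop :=
  [disjoint C & A :|: B] /\
  (forall a b, a \in A -> b \in B -> ~~ reach_in E C a b).

Definition reach_set E A C : {set V} :=
  [set v | [exists a in A, reach_in E C a v]].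

Definition covers E A C' C : Prop := reach_set E A C \subset reach_set E A C'.

Definition important_separator E A B C : Prop :=
  separator E A B C /\
  ~ (exists C' : {set V}, [/\ separator E A B C', C' != C, #|C'| <= #|C| &
                             covers E A C' C]).

Definition rooted (H : digraph) : Prop :=
  exists r : dvert H, forall v, connect (@darc H) r v.

End Digraphs.

(* Main.v *)
Require Import Defs.
From mathcomp Require Import all_boot zify.
Set Implicit Arguments. Unset Strict Implicit. Unset Printing Implicit Defensive.

Section Aux.
Variable V : finType.
Implicit Types (E : rel V) (X Y Z W C : {set V}).

Lemma disjP (A B : {set V}) :
  reflect (forall x, x \in A -> x \in B -> False) [disjoint A & B].
Proof.
rewrite disjoints_subset; apply: (iffP subsetP) => H x.
- by move=> /H; rewrite inE => /negP.
- by move=> xA; rewrite inE; apply/negP => /(H x xA).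
Qed.

Lemma path_notin E Z a p : a \notin Z -> path (del_rel E Z) a p -> last a p \notin Z.
Proof.
elim: p a => [|b p IH] a aZ; first by [].
rewrite /= => /andP[h pp].
by move: h; rewrite /del_rel => /and3P[_ bZ _]; apply: IH.
Qed.

Lemma connect_notin E Z a b : a \notin Z -> connect (del_rel E Z) a b -> b \notin Z.
Proof. move=> aZ /connectP[p pp ->]; exact: path_notin aZ pp. Qed.

Lemma reach_end E Z a b : reach_in E Z a b -> b \notin Z.
Proof. by case/andP=> aZ; apply: connect_notin. Qed.

Lemma reach_refl E Z a : a \notin Z -> reach_in E Z a a.
Proof. by move=> aZ; rewrite /reach_in aZ connect0. Qed.

Lemma reach_trans E Z a b c : reach_in E Z a b -> reach_in E Z b c -> reach_in E Z a c.
Proof.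
case/andP=> aZ ab /andP[_ bc]; rewrite /reach_in aZ; exact: connect_trans ab bc.
Qed.

Lemma reach_step E Z a b c : reach_in E Z a b -> c \notin Z -> E b c -> reach_in E Z a c.
Proof.
move=> ab cZ bc; apply: (reach_trans ab); rewrite /reach_in (reach_end ab).
apply: connect1; by rewrite /del_rel (reach_end ab) cZ bc.
Qed.

Lemma reach_mono E Z1 Z2 a b : Z1 \subset Z2 -> reach_in E Z2 a b -> reach_in E Z1 a b.
Proof.
move=> /subsetP sZ /andP[aZ ab]; rewrite /reach_in.
have -> : a \notin Z1 by apply/negP => /sZ; rewrite (negPf aZ).
apply: connect_sub ab => x y /and3P[xZ yZ xy]; apply: connect1.
rewrite /del_rel xy andbT; apply/andP; split; apply/negP => /sZ; by [rewrite (negPf xZ)|rewrite (negPf yZ)].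
Qed.

Lemma reach_rev E Z a b : reach_in (rev_rel E) Z a b = reach_in E Z b a.
Proof.
have H : forall E' Z' x y, connect (del_rel (rev_rel E') Z') x y = connect (del_rel E' Z') y x.
  move=> E' Z' x y; have := connect_rev (del_rel E' Z') x y; rewrite /= => <-; apply: eq_connect => s t.
  by rewrite /= /del_rel /rev_rel andbCA.
apply/idP/idP => /andP[aZ ab].
- have bZ := connect_notin aZ ab.
  by rewrite /reach_in bZ -H.
- have bZ := connect_notin aZ ab.
  by rewrite /reach_in bZ H.
Qed.

Lemma reach_set1 E Z u v : (v \in reach_set E [set u] Z) = reach_in E Z u v.
Proof.
rewrite inE; apply/existsP/idP => [[a /andP[/set1P -> h]] //| h].
by exists u; rewrite set11 h.
Qed.

Lemma reach_set_mono E Z1 Z2 u : Z1 \subset Z2 ->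
  reach_set E [set u] Z2 \subset reach_set E [set u] Z1.
Proof. by move=> s; apply/subsetP => v; rewrite !reach_set1; apply: reach_mono. Qed.

Lemma path_reach E Y a q : path E a q -> (forall z, z \in a :: q -> z \notin Y) ->
  reach_in E Y a (last a q).
Proof.
elim: q a => [|b q IH] a /=.
  by move=> _ H; apply: reach_refl; apply: H; rewrite inE eqxx.
move=> /andP[ab pq] H.
have aY : a \notin Y by apply: H; rewrite inE eqxx.
have bY : b \notin Y by apply: H; rewrite !inE eqxx orbT.
apply: (reach_trans (b := b)); first by apply: reach_step (reach_refl _ aY) bY ab.
by apply: IH => // z zq; apply: H; rewrite inE zq orbT.
Qed.


Lemma not_disj (A B : {set V}) : ~~ [disjoint A & B] -> exists2 x, x \in A & x \in B.
Proof. by rewrite -setI_eq0 => /set0Pn[x]; rewrite inE => /andP[xA xB]; exists x. Qed.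

Lemma sc_inside E Y K x y : strong_component E Y K -> x \in K -> y \in K ->
  reach_in E (~: K) x y.
Proof.
case=> K0 KY Kr Kmax xK yK.
case/andP: (Kr x y xK yK) => xY /connectP[p pp yE].
move: yK; rewrite yE => {yE y}.
elim: p x xK xY pp => [|b p IH] x xK xY /=.
  by move=> *; apply: reach_refl; rewrite inE negbK.
move=> /andP[h pp] lK.
move: (h); rewrite /del_rel => /and3P[_ bY xb].
have bK : b \in K.
  have Hb : b |: K = K.
    apply: Kmax; first exact: subsetUr.
      apply/subsetP => z; rewrite in_setU in_set1 => /orP[/eqP->|zK]; first by rewrite inE.
      exact: (subsetP KY).
    have bl : reach_in E Y b (last b p) by rewrite /reach_in bY; apply/connectP; exists p.
    have xb' : reach_in E Y x b by apply: reach_step (reach_refl _ xY) bY xb.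
    move=> s t; rewrite !inE => /orP[/eqP->|sK] /orP[/eqP->|tK].
    - exact: reach_refl.
    - exact: reach_trans bl (Kr _ _ lK tK).
    - exact: reach_trans (Kr _ _ sK xK) xb'.
    - exact: Kr.
  by rewrite -Hb setU11.
apply: (reach_trans (b := b)).
  by apply: reach_step (reach_refl _ _) _ xb; rewrite inE negbK.
by apply: IH.
Qed.

Lemma sc_extend E Y Z K : strong_component E Y K -> K \subset ~: Z ->
  exists K', strong_component E Z K' /\ K \subset K'.
Proof.
move=> HK KZ.
have ZK : Z \subset ~: K by rewrite subsetC.
have Kr : forall s t, s \in K -> t \in K -> reach_in E Z s t.
  by move=> s t sK tK; apply: (reach_mono ZK); apply: sc_inside HK sK tK.
case: HK => K0 _ _ _.
case/set0Pn: K0 => x xK.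
have xZ : x \notin Z by have := subsetP KZ x xK; rewrite inE.
pose K' := [set y | reach_in E Z x y && reach_in E Z y x].
have xK' : x \in K' by rewrite inE reach_refl.
exists K'; split.
- split.
  + by apply/set0Pn; exists x.
  + by apply/subsetP => y; rewrite !inE => /andP[/reach_end].
  + move=> s t; rewrite !inE => /andP[_ sx] /andP[xt _]; exact: reach_trans sx xt.
  + move=> C' sub CZ Cr; apply/eqP; rewrite eqEsubset sub andbT.
    apply/subsetP => y yC; have xC := subsetP sub x xK'.
    by rewrite inE !Cr.
- by apply/subsetP => y yK; rewrite inE !Kr.
Qed.

Lemma contains_mono E C C' (H : digraph) : C \subset C' -> contains_sub E C H -> contains_sub E C' H.
Proof.
by move=> /subsetP s [f [fi fC fE]]; exists f; split => // x; apply: s.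
Qed.

Lemma nth_sub (S : seq {set V}) i x : x \in nth set0 S i -> x \in \bigcup_(A <- S) A.
Proof.
elim: S i => [|A S IH] [|i] /=; rewrite ?nth_nil ?inE // big_cons inE.
  by move=> ->.
by move=> /IH ->; rewrite orbT.
Qed.

Lemma core (Hs : seq digraph) E S W k X Y (dir : bool) :
  deletion_set Hs E W -> ordered_partition S W -> solution Hs E S W k X ->
  #|Y| <= k -> [disjoint Y & W] ->
  (forall v w, v \in X -> v \notin Y -> w \in W ->
     ~~ (if dir then reach_in E Y v w else reach_in E Y w v)) ->
  solution Hs E S W k Y.
Proof.
move=> HW [_ _ HSW] [_ _ HX Hhit] HYk HYW P; split => //.
- move=> K HK H HH Hc.
  have KY : K \subset ~: Y by case: HK.
  have Kr : forall s t, s \in K -> t \in K -> reach_in E Y s t by case: HK.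
  case: (boolP [disjoint K & X]) => dKX.
    have KX : K \subset ~: X by rewrite -disjoints_subset.
    have [K' [HK' KK']] := sc_extend HK KX.
    by apply: (HX K' HK' H HH); apply: contains_mono Hc.
  have [v vK vX] := not_disj dKX.
  have vY : v \notin Y by have := subsetP KY v vK; rewrite inE.
  case: (boolP [disjoint K & W]) => dKW.
    have KW : K \subset ~: W by rewrite -disjoints_subset.
    have [K' [HK' KK']] := sc_extend HK KW.
    by apply: (HW K' HK' H HH); apply: contains_mono Hc.
  have [w wK wW] := not_disj dKW.
  by have := P v w vX vY wW; case: (dir); rewrite Kr.
- move=> i j ij x p xS pp lS.
  case: (boolP (has (mem Y) (x :: p))) => // /hasPn notY; exfalso.
  have := Hhit i j ij x p xS pp lS; case/hasP => v vp vX.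
  have vY : v \notin Y by apply: notY.
  have xW : x \in W by rewrite -HSW; apply: nth_sub xS.
  move: pp lS notY; case/splitPl: vp => p1 p2 lv.
  rewrite cat_path last_cat => /andP[pp1 pp2] lS notY.
  have lW : last (last x p1) p2 \in W by rewrite -HSW; apply: nth_sub lS.
  case: (dir) in P.
  + have := P v _ vX vY lW; rewrite -lv path_reach //.
    move=> z; rewrite inE => /orP[/eqP->|zp]; apply: notY.
      by rewrite -cat_cons mem_cat mem_last.
    by rewrite -cat_cons mem_cat zp orbT.
  + have := P v _ vX vY xW; rewrite -lv path_reach //.
    by move=> z zp; apply: notY; rewrite -cat_cons mem_cat zp.
Qed.

Definition bd E (u : V) Z := [set v in Z | [exists r in reach_set E [set u] Z, E r v]].

Lemma bd_sub E u Z : bd E u Z \subset Z.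
Proof. by apply/subsetP => v; rewrite inE => /andP[]. Qed.

Lemma bd_reach E u Z z : u \notin Z -> reach_in E (bd E u Z) u z -> reach_in E Z u z.
Proof.
move=> uZ /andP[_ /connectP[q qp ->]].
elim/last_ind: q qp => [|q y IH]; first by move=> _; apply: reach_refl.
rewrite rcons_path last_rcons => /andP[qp h].
have IH' := IH qp.
move: h; rewrite /del_rel => /and3P[_ yB ly].
have yZ : y \notin Z.
  apply/negP => yZ; move/negP: yB; apply; rewrite inE yZ /=.
  by apply/exists_inP; exists (last u q) => //; rewrite reach_set1.
exact: reach_step IH' yZ ly.
Qed.

Definition sepb E (A B C : {set V}) :=
  [disjoint C & A :|: B] && [forall a in A, [forall b in B, ~~ reach_in E C a b]].

Lemma sepP E A B C : reflect (separator E A B C) (sepb E A B C).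
Proof.
apply: (iffP andP) => [[d /forall_inP f]|[d f]]; split => //.
  by move=> a b aA bB; exact: (forall_inP (f a aA) b bB).
by apply/forall_inP => a aA; apply/forall_inP => b bB; exact: f.
Qed.

Lemma push E u W X : u \notin X -> [disjoint X & W] ->
  (forall w, w \in W -> ~~ reach_in E X u w) ->
  exists C X', [/\ X' \subset X, #|C| <= #|X'|, important_separator E [set u] W C &
     forall v, v \in X' -> v \notin C -> reach_in E C u v].
Proof.
move=> uX dXW nr.
set X' := bd E u X.
set R := reach_set E [set u] X.
have X'X : X' \subset X := bd_sub E u X.
pose Pc := fun C => [&& sepb E [set u] W C, R \subset reach_set E [set u] C & #|C| <= #|X'|].
have PX' : Pc X'.
  rewrite /Pc leqnn andbT reach_set_mono // andbT; apply/sepP; split.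
    apply/disjP => x xX'; rewrite !inE => /orP[/eqP xu| xW].
      by move: (subsetP X'X _ xX'); rewrite xu (negPf uX).
    exact: (disjP _ _ dXW x (subsetP X'X _ xX') xW).
  move=> a b; rewrite inE => /eqP-> bW; apply/negP => /(bd_reach uX) h.
  by move/negP: (nr b bW).
case: (arg_maxnP (fun C => #|reach_set E [set u] C|) PX') => Cm PCm maxCm.
pose P2 := fun C => Pc C && (#|reach_set E [set u] C| == #|reach_set E [set u] Cm|).
have P2Cm : P2 Cm by rewrite /P2 PCm eqxx.
case: (arg_minnP (fun C : {set V} => #|C|) P2Cm) => C /andP[PC /eqP rC] minC.
case/and3P: (PC) => /sepP sepC RC CX'.
have uC : u \notin C.
  by apply/negP => uC; apply: (disjP _ _ sepC.1 u uC); rewrite !inE eqxx.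
exists C, X'; split => //.
- split => // -[C' [sepC' neq le cov]].
  have PC' : Pc C'.
    by rewrite /Pc (subset_trans RC cov) (leq_trans le CX') !andbT; apply/sepP.
  have le2 := maxCm C' PC'; rewrite /= -rC in le2.
  have eqR : reach_set E [set u] C = reach_set E [set u] C'.
    by apply/eqP; rewrite eqEcard cov le2.
  have P2C' : P2 C' by rewrite /P2 PC' -eqR rC eqxx.
  have leC := minC C' P2C'.
  set B := bd E u C.
  have BC : B \subset C := bd_sub E u C.
  have reachB : reach_set E [set u] B = reach_set E [set u] C.
    apply/eqP; rewrite eqEsubset; apply/andP; split; last exact: reach_set_mono.
    by apply/subsetP => z; rewrite !reach_set1; apply: bd_reach.
  have sepB : separator E [set u] W B.
    split.
      by apply/disjP => x xB; exact: (disjP _ _ sepC.1 x (subsetP BC x xB)).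
    move=> a b; rewrite inE => /eqP-> bW; apply/negP => /(bd_reach uC) h.
    by move/negP: (sepC.2 u b (set11 u) bW).
  have P2B : P2 B.
    rewrite /P2 /Pc reachB rC eqxx RC (leq_trans (subset_leq_card BC) CX') !andbT.
    exact/sepP.
  have BeqC : B = C by apply/eqP; rewrite eqEcard BC (minC B P2B).
  have BC' : B \subset C'.
    apply/subsetP => v; rewrite inE => /andP[vC /exists_inP[r rR rv]].
    case: (boolP (v \in C')) => // vC'; exfalso.
    rewrite eqR reach_set1 in rR.
    have h := reach_step rR vC' rv.
    have : v \in reach_set E [set u] C' by rewrite reach_set1.
    rewrite -eqR reach_set1 => /reach_end.
    by rewrite vC.
  move/negP: neq; apply; rewrite eq_sym eqEcard -{1}BeqC BC' le.
  done.
- move=> v; rewrite inE => /andP[vX /exists_inP[r rR rv]] vC.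
  have rC' := subsetP RC r rR; rewrite reach_set1 in rC'.
  exact: reach_step rC' vC rv.
Qed.

End Aux.

Theorem lemma12 (Hs : seq digraph) (V : finType) (E : rel V) (k : nat)
    (W : {set V}) (S : seq {set V}) (X : {set V}) (u : V) :
  (forall H, Stdlib.Lists.List.In H Hs -> rooted H) ->
  deletion_set Hs E W ->
  #|W| <= k.+1 ->
  ordered_partition S W ->
  solution Hs E S W k X ->
  (u \in F_shadow E W X ->
     exists Y C : {set V}, [/\ solution Hs E S W k Y, C \subset Y &
                     important_separator E [set u] W C]) /\
  (u \in R_shadow E W X ->
     exists Y C : {set V}, [/\ solution Hs E S W k Y, C \subset Y &
                     important_separator (rev_rel E) [set u] W C]).
Proof.
move=> _ HW _ Hpart Hsol.
have [Xk dXW _ _] := Hsol.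
have card_ok : forall (C X' : {set V}), X' \subset X -> #|C| <= #|X'| ->
    #|X :\: X' :|: C| <= k.
  move=> C X' X'X CX'.
  have := subset_leq_card X'X.
  rewrite cardsU cardsD (setIidPr X'X); lia.
have disj_ok : forall (C X' : {set V}) E', separator E' [set u] W C ->
    [disjoint X :\: X' :|: C & W].
  move=> C X' E' sepC; apply/disjP => x; rewrite !inE => /orP[/andP[_ xX]|xC] xW.
    exact: (disjP _ _ dXW x xX xW).
  by apply: (disjP _ _ sepC.1 x xC); rewrite !inE xW orbT.
split.
- rewrite inE => /andP[uX /forall_inP nr].
  have [C [X' [X'X CX' impC reachv]]] := push uX dXW nr.
  exists (X :\: X' :|: C), C; split; [|exact: subsetUr|exact: impC].
  apply: (core (dir := true) HW Hpart Hsol (card_ok _ _ X'X CX') (disj_ok _ _ _ impC.1)).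
  move=> v w vX; rewrite !inE negb_or => /andP[vX' vC] wW.
  rewrite vX andbT negbK in vX'.
  have uv := reachv v vX' vC.
  apply/negP => vw.
  have := reach_mono (subsetUr (X :\: X') C) vw => vw'.
  by move/negP: (impC.1.2 u w (set11 u) wW); apply; apply: reach_trans uv vw'.
- rewrite inE => /andP[uX /forall_inP nr].
  have nr' : forall w, w \in W -> ~~ reach_in (rev_rel E) X u w.
    by move=> w wW; rewrite reach_rev; apply: nr.
  have [C [X' [X'X CX' impC reachv]]] := push uX dXW nr'.
  exists (X :\: X' :|: C), C; split; [|exact: subsetUr|exact: impC].
  apply: (core (dir := false) HW Hpart Hsol (card_ok _ _ X'X CX') (disj_ok _ _ _ impC.1)).
  move=> v w vX; rewrite !inE negb_or => /andP[vX' vC] wW.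
  rewrite vX andbT negbK in vX'.
  have uv := reachv v vX' vC; rewrite reach_rev in uv.
  apply/negP => vw.
  have := reach_mono (subsetUr (X :\: X') C) vw => vw'.
  move/negP: (impC.1.2 u w (set11 u) wW); apply; rewrite reach_rev.
  exact: reach_trans vw' uv.
Qed.
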